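(* Let $I\subseteq V$ with $|I|=5$ such that the induced subgraph $G_I$ is a cycle of length 5. Let $X_I$ be a symmetric matrix indexed by $I$ with $X_I\succeq 0$, $X_I\geq 0$ (entrywise), diagonal entries $x_i$ ($i\in I$), and $X_{i,j}=0$ for every edge $[i,j]$ of $G_I$. Suppose that (i) for every nonempty clique $C_1\subseteq I$ of $G_I$ and every $j\in I\setminus C_1$: $\sum_{i\in C_1}X_{i,j}\leq x_j$; and (ii) for all disjoint nonempty cliques $C_1,C_2\subseteq I$ of $G_I$: $\sum_{i\in C_1\cup C_2}x_i\leq 1+\sum_{i\in C_1,\,j\in C_2}X_{i,j}$. Then $X_I\in\mathrm{STAB}^2(G_I)$ if and only if $$\sum_{i\in I}x_i\leq 1+\sum_{\{i,j\}\in N}X_{i,j},$$ where $N$ is the set of the five unordered pairs of distinct nonadjacent vertices of $G_I$.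
   Context: Let $G$ be a simple graph with vertex set $V=\{1,\dots,n\}$ and edge set $E$; $G_I$ denotes the subgraph induced by $I\subseteq V$. For a graph $H$ with vertex set $I$, let $S(H)=\{s\in\{0,1\}^I: s_is_j=0\ \forall [i,j]\in E(H)\}$ (incidence vectors of stable sets, including the zero vector) and $\mathrm{STAB}^2(H)=\operatorname{conv}\{ss^T: s\in S(H)\}$. *)

(* Defs.v *)
From mathcomp Require Import all_boot all_order all_algebra.
From mathcomp Require Import reals.
Set Implicit Arguments. Unset Strict Implicit. Unset Printing Implicit Defensive.
Import Order.TTheory GRing.Theory Num.Theory.
Local Open Scope ring_scope.

(* A simple graph on V = 'I_n (vertices 0..n-1, i.e. {1,..,n} shifted):
   edge relation e, symmetric and irreflexive. *)
Definition simple_graph (n : nat) (e : rel 'I_n) : Prop :=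
  (forall i j, e i j = e j i) /\ (forall i, ~~ e i i).

Definition induced_C5 (n : nat) (e : rel 'I_n) (I : {set 'I_n}) : Prop :=
  exists c : 'I_5 -> 'I_n,
    injective c /\ I = c @: [set: 'I_5] /\
    forall a b : 'I_5,
      e (c a) (c b) = ((val b == (val a).+1 %% 5) || (val a == (val b).+1 %% 5))%N.

Definition stable (n : nat) (e : rel 'I_n) (S : {set 'I_n}) : bool :=
  [forall i in S, forall j in S, ~~ e i j].

Definition clique_in (n : nat) (e : rel 'I_n) (I C : {set 'I_n}) : bool :=
  (C \subset I) && [forall i in C, forall j in C, (i != j) ==> e i j].

Definition psd_on (R : realType) (n : nat) (I : {set 'I_n})
    (X : 'I_n -> 'I_n -> R) : Prop :=
  forall v : 'I_n -> R, 0 <= \sum_(i in I) \sum_(j in I) v i * X i j * v j.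

(* X_I lies in STAB^2(G_I) = conv { s s^T : s in S(G_I) }: a convex
   combination of the matrices s s^T, where s ranges over incidence vectors
   (indexed by I) of stable sets S of G_I (S = set0 gives the zero vector). *)
Definition in_STAB2 (R : realType) (n : nat) (e : rel 'I_n) (I : {set 'I_n})
    (X : 'I_n -> 'I_n -> R) : Prop :=
  exists lam : {set 'I_n} -> R,
    (forall S, 0 <= lam S) /\
    (forall S, lam S != 0 -> (S \subset I) && stable e S) /\
    \sum_(S : {set 'I_n}) lam S = 1 /\
    (forall i j, i \in I -> j \in I ->
       X i j = \sum_(S : {set 'I_n}) lam S * ((i \in S) && (j \in S))%:R).

(* Main.v *)
Require Import Defs.
From mathcomp Require Import all_boot all_order all_algebra.
From mathcomp Require Import reals ring lra.
Import Order.TTheory GRing.Theory Num.Theory.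
Local Open Scope ring_scope.

Section Helpers.
Variable R : realType.

Lemma sum5 (T : finType) (p0 p1 p2 p3 p4 : T) (F : T -> R) :
  uniq [:: p0; p1; p2; p3; p4] ->
  \sum_(i in [set p0; p1; p2; p3; p4]) F i = F p0 + F p1 + F p2 + F p3 + F p4.
Proof.
move=> U.
rewrite (eq_bigl (mem [:: p0; p1; p2; p3; p4])); last by move=> i; rewrite !inE -!orbA.
by rewrite -big_uniq // !big_cons big_nil /= addr0 !addrA.
Qed.

Lemma sum2 (T : finType) (p0 p1 : T) (F : T -> R) :
  p0 != p1 -> \sum_(i in [set p0; p1]) F i = F p0 + F p1.
Proof. by move=> h; rewrite big_setU1 /= ?big_set1 // inE. Qed.

Lemma pairE (n : nat) (X : 'I_n -> 'I_n -> R) (i j : 'I_n) :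
  i != j -> X j i = X i j ->
  (if (j < i)%N then X j i else 0) = X i j - (if (i < j)%N then X i j else 0).
Proof.
move=> hij s; case: ltngtP => h.
- by rewrite ?subrr ?subr0 ?s.
- by rewrite ?subrr ?subr0 ?s.
- by move: hij; rewrite (val_inj h) eqxx.
Qed.

Lemma sumL (T : finType) (L : seq ({set T} * R)) (f : {set T} -> R) :
  \sum_(S : {set T}) (\sum_(p <- L) (S == p.1)%:R * p.2) * f S
  = \sum_(p <- L) p.2 * f p.1.
Proof.
under eq_bigr do rewrite mulr_suml.
rewrite exchange_big; apply: eq_bigr => p _.
rewrite (bigD1 p.1) //= eqxx mul1r big1 ?addr0 // => S /negbTE ->.
by rewrite !mul0r.
Qed.

Lemma sumL1 (T : finType) (L : seq ({set T} * R)) :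
  \sum_(S : {set T}) (\sum_(p <- L) (S == p.1)%:R * p.2) = \sum_(p <- L) p.2.
Proof.
rewrite exchange_big; apply: eq_bigr => p _.
rewrite (bigD1 p.1) //= eqxx mul1r big1 ?addr0 // => S /negbTE ->.
by rewrite !mul0r.
Qed.

Lemma boolC5 {b0 b1 b2 b3 b4 : bool} :
  ~~ (b0 && b1) -> ~~ (b1 && b2) -> ~~ (b2 && b3) -> ~~ (b3 && b4) -> ~~ (b4 && b0) ->
  (b0%:R + b1%:R + b2%:R + b3%:R + b4%:R : R)
  <= 1 + (b0 && b2)%:R + (b1 && b3)%:R + (b2 && b4)%:R + (b3 && b0)%:R + (b4 && b1)%:R.
Proof.
by case: b0; case: b1; case: b2; case: b3; case: b4 => //= *;
  rewrite ?mulr1n ?mulr0n; lra.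
Qed.

End Helpers.

Lemma stable_pair {n : nat} {e : rel 'I_n} {S : {set 'I_n}} {u v : 'I_n} :
  stable e S -> e u v -> ~~ ((u \in S) && (v \in S)).
Proof.
move=> /forallP st huv; apply/negP => /andP[hu hv].
by move: (st u); rewrite hu /= => /forallP/(_ v); rewrite hv huv.
Qed.

Lemma stable0 (n : nat) (e : rel 'I_n) : stable e set0.
Proof. by apply/forallP => i; rewrite inE. Qed.

Lemma stable1 (n : nat) (e : rel 'I_n) u : ~~ e u u -> stable e [set u].
Proof.
move=> h; apply/forallP => i; apply/implyP; rewrite inE => /eqP->.
by apply/forallP => j; apply/implyP; rewrite inE => /eqP->.
Qed.

Lemma stable2 (n : nat) (e : rel 'I_n) u v : ~~ e u u -> ~~ e v v -> ~~ e u v -> ~~ e v u ->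
  stable e [set u; v].
Proof.
move=> h1 h2 h3 h4; apply/forallP => i; apply/implyP; rewrite !inE => /orP[]/eqP->;
by apply/forallP => j; apply/implyP; rewrite !inE => /orP[]/eqP->.
Qed.

Lemma clique2 {n : nat} {e : rel 'I_n} {I : {set 'I_n}} {u v} :
  u \in I -> v \in I -> e u v -> e v u -> clique_in e I [set u; v].
Proof.
move=> hu hv h1 h2; apply/andP; split.
  by apply/subsetP => z; rewrite !inE => /orP[]/eqP->.
apply/forallP => i; apply/implyP; rewrite !inE => /orP[]/eqP->;
by apply/forallP => j; apply/implyP; rewrite !inE => /orP[]/eqP->;
  rewrite ?eqxx ?h1 ?h2 ?implybT.
Qed.

Theorem lemmaL6 (R : realType) (n : nat) (e : rel 'I_n) (I : {set 'I_n})
    (X : 'I_n -> 'I_n -> R) :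
  simple_graph e ->
  #|I| = 5%N ->
  induced_C5 e I ->
  (forall i j, i \in I -> j \in I -> X i j = X j i) ->
  psd_on I X ->
  (forall i j, i \in I -> j \in I -> 0 <= X i j) ->
  (forall i j, i \in I -> j \in I -> e i j -> X i j = 0) ->
  (forall (C1 : {set 'I_n}) (j : 'I_n),
      clique_in e I C1 -> C1 != set0 -> j \in I :\: C1 ->
      \sum_(i in C1) X i j <= X j j) ->
  (forall C1 C2 : {set 'I_n},
      clique_in e I C1 -> clique_in e I C2 -> C1 != set0 -> C2 != set0 ->
      [disjoint C1 & C2] ->
      \sum_(i in C1 :|: C2) X i i
        <= 1 + \sum_(i in C1) \sum_(j in C2) X i j) ->
  (in_STAB2 e I X <->
   \sum_(i in I) X i i
     <= 1 + \sum_(i in I) \sum_(j in I | (i < j)%N && ~~ e i j) X i j).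
Proof.
move=> [eS eirr] _ [c [injc [HI Hc]]] Xsym _ Xge0 Xz Hi _.

pose o0 : 'I_5 := @Ordinal 5 0 isT.
pose o1 : 'I_5 := @Ordinal 5 1 isT.
pose o2 : 'I_5 := @Ordinal 5 2 isT.
pose o3 : 'I_5 := @Ordinal 5 3 isT.
pose o4 : 'I_5 := @Ordinal 5 4 isT.
pose p0 := c o0.
pose p1 := c o1.
pose p2 := c o2.
pose p3 := c o3.
pose p4 := c o4.
have d01 : (p0 == p1) = false by apply/negbTE/eqP => /injc/(congr1 val).
have d02 : (p0 == p2) = false by apply/negbTE/eqP => /injc/(congr1 val).
have d03 : (p0 == p3) = false by apply/negbTE/eqP => /injc/(congr1 val).
have d04 : (p0 == p4) = false by apply/negbTE/eqP => /injc/(congr1 val).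
have d10 : (p1 == p0) = false by apply/negbTE/eqP => /injc/(congr1 val).
have d12 : (p1 == p2) = false by apply/negbTE/eqP => /injc/(congr1 val).
have d13 : (p1 == p3) = false by apply/negbTE/eqP => /injc/(congr1 val).
have d14 : (p1 == p4) = false by apply/negbTE/eqP => /injc/(congr1 val).
have d20 : (p2 == p0) = false by apply/negbTE/eqP => /injc/(congr1 val).
have d21 : (p2 == p1) = false by apply/negbTE/eqP => /injc/(congr1 val).
have d23 : (p2 == p3) = false by apply/negbTE/eqP => /injc/(congr1 val).
have d24 : (p2 == p4) = false by apply/negbTE/eqP => /injc/(congr1 val).
have d30 : (p3 == p0) = false by apply/negbTE/eqP => /injc/(congr1 val).
have d31 : (p3 == p1) = false by apply/negbTE/eqP => /injc/(congr1 val).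
have d32 : (p3 == p2) = false by apply/negbTE/eqP => /injc/(congr1 val).
have d34 : (p3 == p4) = false by apply/negbTE/eqP => /injc/(congr1 val).
have d40 : (p4 == p0) = false by apply/negbTE/eqP => /injc/(congr1 val).
have d41 : (p4 == p1) = false by apply/negbTE/eqP => /injc/(congr1 val).
have d42 : (p4 == p2) = false by apply/negbTE/eqP => /injc/(congr1 val).
have d43 : (p4 == p3) = false by apply/negbTE/eqP => /injc/(congr1 val).
have e00 : e p0 p0 = false by rewrite /p0 /p0 Hc.
have e01 : e p0 p1 = true by rewrite /p0 /p1 Hc.
have e02 : e p0 p2 = false by rewrite /p0 /p2 Hc.
have e03 : e p0 p3 = false by rewrite /p0 /p3 Hc.
have e04 : e p0 p4 = true by rewrite /p0 /p4 Hc.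
have e10 : e p1 p0 = true by rewrite /p1 /p0 Hc.
have e11 : e p1 p1 = false by rewrite /p1 /p1 Hc.
have e12 : e p1 p2 = true by rewrite /p1 /p2 Hc.
have e13 : e p1 p3 = false by rewrite /p1 /p3 Hc.
have e14 : e p1 p4 = false by rewrite /p1 /p4 Hc.
have e20 : e p2 p0 = false by rewrite /p2 /p0 Hc.
have e21 : e p2 p1 = true by rewrite /p2 /p1 Hc.
have e22 : e p2 p2 = false by rewrite /p2 /p2 Hc.
have e23 : e p2 p3 = true by rewrite /p2 /p3 Hc.
have e24 : e p2 p4 = false by rewrite /p2 /p4 Hc.
have e30 : e p3 p0 = false by rewrite /p3 /p0 Hc.
have e31 : e p3 p1 = false by rewrite /p3 /p1 Hc.
have e32 : e p3 p2 = true by rewrite /p3 /p2 Hc.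
have e33 : e p3 p3 = false by rewrite /p3 /p3 Hc.
have e34 : e p3 p4 = true by rewrite /p3 /p4 Hc.
have e40 : e p4 p0 = true by rewrite /p4 /p0 Hc.
have e41 : e p4 p1 = false by rewrite /p4 /p1 Hc.
have e42 : e p4 p2 = false by rewrite /p4 /p2 Hc.
have e43 : e p4 p3 = true by rewrite /p4 /p3 Hc.
have e44 : e p4 p4 = false by rewrite /p4 /p4 Hc.
have HI5 : I = [set p0; p1; p2; p3; p4].
  rewrite HI; apply/setP => i; apply/imsetP/idP => [[a _ ->]|].
    case: a => [[|[|[|[|[|m]]]]] h] //.
    - rewrite (_ : Ordinal h = o0); last exact: val_inj.
      by rewrite !inE eqxx ?orbT ?orTb.
    - rewrite (_ : Ordinal h = o1); last exact: val_inj.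
      by rewrite !inE eqxx ?orbT ?orTb.
    - rewrite (_ : Ordinal h = o2); last exact: val_inj.
      by rewrite !inE eqxx ?orbT ?orTb.
    - rewrite (_ : Ordinal h = o3); last exact: val_inj.
      by rewrite !inE eqxx ?orbT ?orTb.
    - rewrite (_ : Ordinal h = o4); last exact: val_inj.
      by rewrite !inE eqxx ?orbT ?orTb.
  rewrite !inE -!orbA => /orP[/eqP->|/orP[/eqP->|/orP[/eqP->|/orP[/eqP->|/eqP->]]]];
  [exists o0|exists o1|exists o2|exists o3|exists o4] => //.
clear HI; subst I.
have m0 : p0 \in [set p0; p1; p2; p3; p4] by rewrite !inE eqxx ?orbT ?orTb.
have m1 : p1 \in [set p0; p1; p2; p3; p4] by rewrite !inE eqxx ?orbT ?orTb.
have m2 : p2 \in [set p0; p1; p2; p3; p4] by rewrite !inE eqxx ?orbT ?orTb.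
have m3 : p3 \in [set p0; p1; p2; p3; p4] by rewrite !inE eqxx ?orbT ?orTb.
have m4 : p4 \in [set p0; p1; p2; p3; p4] by rewrite !inE eqxx ?orbT ?orTb.
have U : uniq [:: p0; p1; p2; p3; p4] by rewrite /= !inE ?d01 ?d02 ?d03 ?d04 ?d10 ?d12 ?d13 ?d14 ?d20 ?d21 ?d23 ?d24 ?d30 ?d31 ?d32 ?d34 ?d40 ?d41 ?d42 ?d43.
have s01 : X p1 p0 = X p0 p1 by apply: (Xsym).
have s02 : X p2 p0 = X p0 p2 by apply: (Xsym).
have s03 : X p3 p0 = X p0 p3 by apply: (Xsym).
have s04 : X p4 p0 = X p0 p4 by apply: (Xsym).
have s12 : X p2 p1 = X p1 p2 by apply: (Xsym).
have s13 : X p3 p1 = X p1 p3 by apply: (Xsym).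
have s14 : X p4 p1 = X p1 p4 by apply: (Xsym).
have s23 : X p3 p2 = X p2 p3 by apply: (Xsym).
have s24 : X p4 p2 = X p2 p4 by apply: (Xsym).
have s34 : X p4 p3 = X p3 p4 by apply: (Xsym).
have z01 : X p0 p1 = 0 by apply: (Xz).
have z04 : X p0 p4 = 0 by apply: (Xz).
have z10 : X p1 p0 = 0 by apply: (Xz).
have z12 : X p1 p2 = 0 by apply: (Xz).
have z21 : X p2 p1 = 0 by apply: (Xz).
have z23 : X p2 p3 = 0 by apply: (Xz).
have z32 : X p3 p2 = 0 by apply: (Xz).
have z34 : X p3 p4 = 0 by apply: (Xz).
have z40 : X p4 p0 = 0 by apply: (Xz).
have z43 : X p4 p3 = 0 by apply: (Xz).
have g02 : 0 <= X p0 p2 by apply: (Xge0).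
have g03 : 0 <= X p0 p3 by apply: (Xge0).
have g13 : 0 <= X p1 p3 by apply: (Xge0).
have g14 : 0 <= X p1 p4 by apply: (Xge0).
have g24 : 0 <= X p2 p4 by apply: (Xge0).
have Hd : \sum_(i in [set p0; p1; p2; p3; p4]) X i i = X p0 p0 + X p1 p1 + X p2 p2 + X p3 p3 + X p4 p4 by rewrite sum5.
have Hp : \sum_(i in [set p0; p1; p2; p3; p4]) \sum_(j in [set p0; p1; p2; p3; p4] | (i < j)%N && ~~ e i j) X i j
   = X p0 p2 + X p1 p3 + X p2 p4 + X p3 p0 + X p4 p1.
  rewrite sum5 // !big_mkcondr !sum5 // e00 e01 e02 e03 e04 e10 e11 e12 e13 e14 e20 e21 e22 e23 e24 e30 e31 e32 e33 e34 e40 e41 e42 e43 e44 /= ?andbF ?andbT ?ltnn /=.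
  rewrite (@pairE R n X p0 p2 (negbT d02) s02).
  rewrite (@pairE R n X p1 p3 (negbT d13) s13).
  rewrite (@pairE R n X p2 p4 (negbT d24) s24).
  rewrite (@pairE R n X p3 p0 (negbT d30) (esym s03)).
  rewrite (@pairE R n X p4 p1 (negbT d41) (esym s14)).
  lra.
rewrite Hp Hd; split.
- move=> [lam [lam0 [lams [lam1 lamX]]]]; rewrite -lam1.
  rewrite (lamX _ _ m0 m0).
  rewrite (lamX _ _ m1 m1).
  rewrite (lamX _ _ m2 m2).
  rewrite (lamX _ _ m3 m3).
  rewrite (lamX _ _ m4 m4).
  rewrite (lamX _ _ m0 m2).
  rewrite (lamX _ _ m1 m3).
  rewrite (lamX _ _ m2 m4).
  rewrite (lamX _ _ m3 m0).
  rewrite (lamX _ _ m4 m1).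
  rewrite -!big_split /=; apply: ler_sum => S _.
  rewrite !andbb.
  have [->|nz] := eqVneq (lam S) 0; first by rewrite !mul0r; lra.
  have /andP[_ st] := lams S nz.
  have := boolC5 R (stable_pair st e01) (stable_pair st e12) (stable_pair st e23) (stable_pair st e34) (stable_pair st e40).
  move/(ler_wpM2l (lam0 S)); rewrite !mulrDr mulr1; lra.
- move=> H.
  have i0 : X p2 p0 + X p3 p0 <= X p0 p0.
    rewrite -(@sum2 R _ _ _ (fun i => X i p0)) ?d23 //; apply: Hi.
    - exact: clique2.
    - by apply/set0Pn; exists p2; rewrite !inE eqxx.
    - by rewrite !inE d02 d03 eqxx ?orbT.
  have i1 : X p3 p1 + X p4 p1 <= X p1 p1.
    rewrite -(@sum2 R _ _ _ (fun i => X i p1)) ?d34 //; apply: Hi.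
    - exact: clique2.
    - by apply/set0Pn; exists p3; rewrite !inE eqxx.
    - by rewrite !inE d13 d14 eqxx ?orbT.
  have i2 : X p4 p2 + X p0 p2 <= X p2 p2.
    rewrite -(@sum2 R _ _ _ (fun i => X i p2)) ?d40 //; apply: Hi.
    - exact: clique2.
    - by apply/set0Pn; exists p4; rewrite !inE eqxx.
    - by rewrite !inE d24 d20 eqxx ?orbT.
  have i3 : X p0 p3 + X p1 p3 <= X p3 p3.
    rewrite -(@sum2 R _ _ _ (fun i => X i p3)) ?d01 //; apply: Hi.
    - exact: clique2.
    - by apply/set0Pn; exists p0; rewrite !inE eqxx.
    - by rewrite !inE d30 d31 eqxx ?orbT.
  have i4 : X p1 p4 + X p2 p4 <= X p4 p4.
    rewrite -(@sum2 R _ _ _ (fun i => X i p4)) ?d12 //; apply: Hi.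
    - exact: clique2.
    - by apply/set0Pn; exists p1; rewrite !inE eqxx.
    - by rewrite !inE d41 d42 eqxx ?orbT.
  have w0 : 0 <= 1 - (X p0 p0 + X p1 p1 + X p2 p2 + X p3 p3 + X p4 p4) + (X p0 p2 + X p1 p3 + X p2 p4 + X p3 p0 + X p4 p1) by clear - H; lra.
  have ws0 : 0 <= X p0 p0 - X p0 p2 - X p3 p0 by clear - i0 s02 s03; lra.
  have ws1 : 0 <= X p1 p1 - X p1 p3 - X p4 p1 by clear - i1 s13 s14; lra.
  have ws2 : 0 <= X p2 p2 - X p2 p4 - X p0 p2 by clear - i2 s24 s02; lra.
  have ws3 : 0 <= X p3 p3 - X p3 p0 - X p1 p3 by clear - i3 s03 s13; lra.
  have ws4 : 0 <= X p4 p4 - X p4 p1 - X p2 p4 by clear - i4 s14 s24; lra.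
  have g30 : 0 <= X p3 p0 by apply: (Xge0).
  have g41 : 0 <= X p4 p1 by apply: (Xge0).
  clear Hd Hp H i0 i1 i2 i3 i4 Hi Xz Xge0 Xsym.
  pose L := [:: (set0, 1 - (X p0 p0 + X p1 p1 + X p2 p2 + X p3 p3 + X p4 p4) + (X p0 p2 + X p1 p3 + X p2 p4 + X p3 p0 + X p4 p1));
    ([set p0], X p0 p0 - X p0 p2 - X p3 p0);
    ([set p1], X p1 p1 - X p1 p3 - X p4 p1);
    ([set p2], X p2 p2 - X p2 p4 - X p0 p2);
    ([set p3], X p3 p3 - X p3 p0 - X p1 p3);
    ([set p4], X p4 p4 - X p4 p1 - X p2 p4);
    ([set p0; p2], X p0 p2);
    ([set p1; p3], X p1 p3);
    ([set p2; p4], X p2 p4);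
    ([set p3; p0], X p3 p0);
    ([set p4; p1], X p4 p1)].
  exists (fun S => \sum_(p <- L) (S == p.1)%:R * p.2); split; [|split; [|split]].
  + move=> S; rewrite /L !big_cons big_nil /=.
    by repeat apply: addr_ge0 => //; apply: mulr_ge0 => //.
  { move=> S; apply: contraR => hS.
    have nT : forall T : {set 'I_n}, (T \subset [set p0; p1; p2; p3; p4]) && stable e T -> (S == T) = false.
      by move=> T hT; apply/negbTE; apply: contra hS => /eqP->.
    rewrite /L !big_cons big_nil /= !nT ?mul0r ?addr0 //.
    all: try by rewrite sub0set stable0.
    all: try by rewrite sub1set ?m0 ?m1 ?m2 ?m3 ?m4 stable1 ?eirr.
    all: apply/andP; split; [by apply/subsetP => z /set2P[]-> | apply: stable2; by rewrite ?eirr ?e00 ?e01 ?e02 ?e03 ?e04 ?e10 ?e11 ?e12 ?e13 ?e14 ?e20 ?e21 ?e22 ?e23 ?e24 ?e30 ?e31 ?e32 ?e33 ?e34 ?e40 ?e41 ?e42 ?e43 ?e44]. }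
  + rewrite sumL1 /L !big_cons big_nil /=; ring.
  + move=> i j; rewrite !inE -!orbA => hi hj; rewrite sumL /L !big_cons big_nil /= !inE.
    move: hi hj => /orP[/eqP->|/orP[/eqP->|/orP[/eqP->|/orP[/eqP->|/eqP->]]]] /orP[/eqP->|/orP[/eqP->|/orP[/eqP->|/orP[/eqP->|/eqP->]]]];
    rewrite ?eqxx ?d01 ?d02 ?d03 ?d04 ?d10 ?d12 ?d13 ?d14 ?d20 ?d21 ?d23 ?d24 ?d30 ?d31 ?d32 ?d34 ?d40 ?d41 ?d42 ?d43 /= ?mulr1n ?mulr0n ?mulr1 ?mulr0 ?s01 ?s02 ?s03 ?s04 ?s12 ?s13 ?s14 ?s23 ?s24 ?s34 ?z01 ?z04 ?z12 ?z23 ?z34; ring.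
Qed.
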